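(* Let $S_{\text{thirds}}=(1,\mathbb{R}^{+},\{-\tfrac13,0,\tfrac13\},f_{\text{add}},\{\bot\}\cup\mathbb{Z}^{+},h_{\text{sqz}},x_0=0)$ and $\widehat{S}_{\text{binary}}=(1,\mathbb{R}^{+},\{\pm\tfrac{1}{2^p}\mid p\in\mathbb{Z}\},f_{\text{add}},\{\bot\}\cup\mathbb{Z}^{+},h_{\text{sqz}},\widehat{x}_0=0)$, where $f_{\text{add}}(x,u)=x+u$ and $$h_{\text{sqz}}(x)=\begin{cases} q & \text{if there is } q\in\mathbb{Z}^{+} \text{ with } -\frac{1}{4\cdot 2^q}\le x-\frac{q}{3}\le\frac{1}{4\cdot 2^q},\\ \bot & \text{otherwise.}\end{cases}$$ For any $1$-illusion of $S_{\text{thirds}}$ by $\widehat{S}_{\text{binary}}$, with witness time-scaling function $z$, and any finite $T$, when the robot in $S_{\text{thirds}}$ follows the constant policy $u_k=\tfrac13$, there exists $N_T>0$ such that $$T<\max_{k\in\{1,\dots,N_T\}}\{z(k+1)-z(k)\}.$$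
   Context: A deterministic multi-robot transition system is a 7-tuple $(n,X,U,f,Y,h,x_0)$: $n$ robots, product state space $X$, product action space $U$, transition function $f:X\times U\to X$ (componentwise per robot), product observation space $Y$, observation function $h:X\to Y$ (componentwise per robot, $h^{(i)}$), initial state $x_0$; it evolves by $x_{k+1}=f(x_k,u_k)$, $y_k=h(x_k)$. Here both systems have a single robot. When a primary system $\widehat{S}$ (hatted quantities) emulates a secondary system $S$, a robot policy $\widehat{\pi}^{(i)}$ for robot $i$ of $\widehat{S}$ maps its own action history $\widehat{u}^{(i)}_0,\dots,\widehat{u}^{(i)}_k$, its observation history $\widehat{y}^{(i)}_0,\dots,\widehat{y}^{(i)}_k$, and the state history $x_0,\dots,x_\ell$ of the secondary system (with $\ell$ possibly different from $k$) to an action $\widehat{u}^{(i)}_k$. Robot policies in $S$ choose actions from histories in the same manner. $\widehat{S}$ is an $m$-illusion of $S$ (with $0<m\le n$) if there exist (i) robot policies $\widehat{\pi}^{(1)},\dots,\widehat{\pi}^{(\widehat{n})}$ in $\widehat{S}$, (ii) a strictly increasing function $z:\mathbb{Z}^+\to\mathbb{Z}^+$, and (iii) functions $\rho_k:\{1,\dots,m\}\to\{1,\dots,\widehat{n}\}$, such that for any robot policies $\pi^{(1)},\dots,\pi^{(n)}$ in $S$, for all $k\ge0$ and $1\le i\le m$, $h^{(i)}(x_k)=\widehat{h}^{(\rho_k(i))}(\widehat{x}_{z(k)})$, where $x$ and $\widehat{x}$ are the state trajectories of $S$ and $\widehat{S}$. A tuple $(\widehat{\pi},(\rho_k),z)$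 satisfying this is a witness to the illusion. *)

(* Defs.v *)
From Stdlib Require Import Reals Lra Lia List ZArith ClassicalEpsilon.
Import ListNotations.
Open Scope R_scope.

(** Observation space {bot} ∪ Z^+ : [None] is bot, [Some q] is q (q >= 1). *)
Definition Obs := option nat.

Definition sqz_cond (x : R) (q : nat) : Prop :=
  (1 <= q)%nat /\
  - (1 / (4 * 2 ^ q)) <= x - INR q / 3 <= 1 / (4 * 2 ^ q).

(** h_sqz : returns q if such a q in Z^+ exists, bot otherwise
    (such a q is unique since the intervals are disjoint). *)
Definition h_sqz (x : R) : Obs :=
  match excluded_middle_informative (exists q : nat, sqz_cond x q) with
  | left H => Some (proj1_sig (constructive_indefinite_description _ H))
  | right _ => None
  end.

Definition f_add (x u : R) : R := x + u.

Definition thirds_action (u : R) : Prop := u = - (1/3) \/ u = 0 \/ u = 1/3.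

Definition binary_action (u : R) : Prop :=
  exists p : Z, u = / powerRZ 2 p \/ u = - / powerRZ 2 p.

(** Policies of the (single) robot of the secondary system S_thirds:
    from own past action history u_0..u_{k-1} and observation history
    y_0..y_k to the action u_k. *)
Definition sec_policy := list R -> list Obs -> R.

Definition valid_sec_policy (pi : sec_policy) : Prop :=
  forall us ys, thirds_action (pi us ys).

(** Secondary run: (states x_0..x_k, actions u_0..u_{k-1}), x_0 = 0. *)
Fixpoint sec_run (pi : sec_policy) (k : nat) : list R * list R :=
  match k with
  | O => ([0], [])
  | S k' =>
      let (st, ac) := sec_run pi k' in
      let u := pi ac (map h_sqz st) in
      (st ++ [f_add (last st 0) u], ac ++ [u])
  end.

Definition sec_traj (pi : sec_policy) (k : nat) : R := last (fst (sec_run pi k)) 0.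

(** Policies of the (single) robot of the primary system S^_binary:
    from own past action history, observation history y^_0..y^_j and the
    state history x_0..x_l of the secondary system, to the action u^_j. *)
Definition prim_policy := list R -> list Obs -> list R -> R.

Definition valid_prim_policy (pih : prim_policy) : Prop :=
  forall us ys xs, binary_action (pih us ys xs).

Definition prefix (x : nat -> R) (n : nat) : list R := map x (seq 0 (S n)).

(** Primary run driven by the secondary trajectory [x]; at primary step j the
    policy sees the secondary state history x_0..x_(ell j). *)
Fixpoint prim_run (pih : prim_policy) (ell : nat -> nat) (x : nat -> R) (j : nat)
  : list R * list R :=
  match j with
  | O => ([0], [])
  | S j' =>
      let (st, ac) := prim_run pih ell x j' in
      let u := pih ac (map h_sqz st) (prefix x (ell j')) in
      (st ++ [f_add (last st 0) u], ac ++ [u])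
  end.

Definition prim_traj (pih : prim_policy) (ell : nat -> nat) (x : nat -> R) (j : nat) : R :=
  last (fst (prim_run pih ell x j)) 0.

Definition strictly_increasing (z : nat -> nat) : Prop :=
  forall a b, (a < b)%nat -> (z a < z b)%nat.

(** Witness of a 1-illusion of S_thirds by S^_binary (n = n^ = m = 1, so
    rho_k is necessarily the identity on {1}).  [ell] fixes which secondary
    state history x_0..x_(ell j) the primary policy sees at its step j. *)
Definition illusion_witness (pih : prim_policy) (ell : nat -> nat) (z : nat -> nat) : Prop :=
  valid_prim_policy pih /\ strictly_increasing z /\
  forall pi : sec_policy, valid_sec_policy pi ->
    forall k : nat,
      h_sqz (sec_traj pi k) = h_sqz (prim_traj pih ell (sec_traj pi) (z k)).

Definition max_gap (z : nat -> nat) (N : nat) : nat :=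
  fold_right Nat.max 0%nat (map (fun k => (z (S k) - z k)%nat) (seq 1 N)).

Definition const_third : sec_policy := fun _ _ => 1/3.

(* Main.v *)
Require Import Defs.
From Stdlib Require Import Reals List.
From Stdlib Require Import Lra Lia ZArith Classical ClassicalEpsilon.
Import ListNotations.
Open Scope R_scope.

Definition sumR (l : list R) : R := fold_right Rplus 0 l.

Lemma sumR_app l1 l2 : sumR (l1 ++ l2) = sumR l1 + sumR l2.
Proof. induction l1; simpl; [lra|]. unfold sumR in *. simpl. rewrite IHl1. lra. Qed.

Definition G (u : R) : Prop :=
  forall K : nat, (exists N : Z, u * 2 ^ K = IZR N) \/ Rabs u <= / 2 ^ (S K).

Lemma pow2_int m : exists N, 2 ^ m = IZR N.
Proof. exists (2 ^ Z.of_nat m)%Z. rewrite <- pow_IZR. reflexivity. Qed.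

Lemma pow2_pos m : 0 < 2 ^ m.
Proof. apply pow_lt. lra. Qed.

Lemma G_opp w : G w -> G (- w).
Proof.
  intros H K. destruct (H K) as [[N HN]|HN].
  - left. exists (- N)%Z. rewrite opp_IZR, <- HN. ring.
  - right. rewrite Rabs_Ropp. exact HN.
Qed.

Lemma G_inv p : G (/ powerRZ 2 p).
Proof.
  intros K. destruct p as [|pp|pp]; simpl.
  - left. destruct (pow2_int K) as [N HN]. exists N. rewrite <- HN. field.
  - set (a := Pos.to_nat pp). destruct (le_lt_dec a K) as [Ha|Ha].
    + left. destruct (pow2_int (K - a)) as [N HN]. exists N. rewrite <- HN.
      replace K with ((K - a) + a)%nat at 1 by lia. rewrite pow_add.
      field. apply Rgt_not_eq, pow2_pos.
    + right. rewrite Rabs_pos_eq.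
      2: { apply Rlt_le, Rinv_0_lt_compat, pow2_pos. }
      change (2 * 2 ^ K) with (2 ^ S K).
      apply Rinv_le_contravar. apply pow2_pos. apply Rle_pow; [lra|lia].
  - left. destruct (pow2_int (Pos.to_nat pp + K)) as [N HN]. exists N. rewrite <- HN.
    rewrite pow_add, Rinv_inv. reflexivity.
Qed.

Lemma binary_G u : binary_action u -> G u.
Proof.
  intros [p [Hp|Hp]]; subst; [apply G_inv | apply G_opp, G_inv].
Qed.

Lemma sum_int K l : (forall t, In t l -> exists N, t * 2 ^ K = IZR N) ->
  exists N, sumR l * 2 ^ K = IZR N.
Proof.
  induction l as [|a l IH]; intros H.
  - exists 0%Z. unfold sumR; simpl. ring.
  - destruct (H a (or_introl eq_refl)) as [N1 H1].
    destruct IH as [N2 H2]. { intros t Ht. apply H. right. exact Ht. }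
    exists (N1 + N2)%Z. rewrite plus_IZR, <- H1, <- H2. unfold sumR; simpl. ring.
Qed.

Lemma pow2_mod3 K : exists m, (2 ^ K = 3 * m + 1 \/ 2 ^ K = 3 * m + 2)%nat.
Proof.
  induction K as [|K [m [Hm|Hm]]].
  - exists 0%nat. simpl. lia.
  - exists (2 * m)%nat. rewrite Nat.pow_succ_r'. lia.
  - exists (2 * m + 1)%nat. rewrite Nat.pow_succ_r'. lia.
Qed.

Lemma int_bound K S : (exists N, S * 2 ^ K = IZR N) -> / (3 * 2 ^ K) <= Rabs (S - 1/3).
Proof.
  intros [N HN].
  destruct (pow2_mod3 K) as [m Hm].
  set (d := (3 * N - Z.of_nat (2 ^ K))%Z).
  assert (Hd : (d <> 0)%Z) by (unfold d; lia).
  assert (HP := pow2_pos K).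
  assert (E : IZR d = 3 * (S * 2 ^ K) - 2 ^ K).
  { unfold d. rewrite minus_IZR, mult_IZR, <- INR_IZR_INZ, pow_INR, HN. simpl (INR 2).
    replace (1 + 1) with 2 by ring. ring. }
  assert (E2 : S - 1/3 = IZR d * / (3 * 2 ^ K)) by (rewrite E; field; lra).
  rewrite E2, Rabs_mult, (Rabs_pos_eq (/ _)).
  2: { apply Rlt_le, Rinv_0_lt_compat. lra. }
  assert (H1 : 1 <= Rabs (IZR d)).
  { rewrite <- abs_IZR. apply IZR_le. lia. }
  assert (Hi : 0 < / (3 * 2 ^ K)) by (apply Rinv_0_lt_compat; lra).
  nra.
Qed.

Lemma core n : exists K : nat, forall l, (forall t, In t l -> G t) -> (length l <= n)%nat ->
  / (3 * 2 ^ K) <= Rabs (sumR l - 1/3).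
Proof.
  induction n as [|n [K0 IH]].
  - exists 0%nat. intros l _ Hl. destruct l; simpl in Hl; [|lia].
    unfold sumR; simpl. rewrite Rabs_left by lra. lra.
  - exists (S (S K0)). intros l HG Hl.
    destruct (classic (exists t, In t l /\ ~ exists N, t * 2 ^ (S (S K0)) = IZR N)) as [[t [Ht Hn]]|Hall].
    + destruct (in_split _ _ Ht) as [l1 [l2 E]]. subst l.
      assert (Hs : Rabs t <= / 2 ^ (S (S (S K0)))).
      { destruct (HG t Ht (S (S K0))) as [H|H]; [contradiction|exact H]. }
      assert (IH' := IH (l1 ++ l2)).
      rewrite length_app in Hl, IH'. simpl in Hl.
      assert (B : / (3 * 2 ^ K0) <= Rabs (sumR (l1 ++ l2) - 1/3)).
      { apply IH'; [|lia]. intros x Hx. apply HG. apply in_app_iff in Hx. apply in_app_iff.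
        simpl. tauto. }
      rewrite sumR_app in B. rewrite sumR_app. unfold sumR at 2. simpl fold_right.
      fold (sumR l2).
      pose proof (Rabs_triang_inv (sumR l1 + sumR l2 - 1/3) (- t)) as Tr.
      rewrite Rabs_Ropp in Tr.
      replace (sumR l1 + sumR l2 - 1 / 3 - - t) with (sumR l1 + (t + sumR l2) - 1/3) in Tr by ring.
      assert (HP := pow2_pos K0).
      simpl pow in Hs |- *.
      assert (I1 : / (2 * (2 * (2 * 2 ^ K0))) = /8 * / 2 ^ K0) by (field; lra).
      assert (I2 : / (3 * (2 * (2 * 2 ^ K0))) = /12 * / 2 ^ K0) by (field; lra).
      assert (I3 : / (3 * 2 ^ K0) = /3 * / 2 ^ K0) by (field; lra).
      assert (Hi : 0 < / 2 ^ K0) by (apply Rinv_0_lt_compat; lra).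
      rewrite I1 in Hs. rewrite I3 in B. rewrite I2. lra.
    + apply int_bound. apply sum_int. intros t Ht.
      apply NNPP. intro Hn. apply Hall. exists t. auto.
Qed.

Lemma prim_step pih ell x j : valid_prim_policy pih ->
  exists u, binary_action u /\ prim_traj pih ell x (S j) = prim_traj pih ell x j + u.
Proof.
  intros Hv. unfold prim_traj. simpl. destruct (prim_run pih ell x j) as [st ac]. simpl.
  eexists. split. apply Hv. rewrite last_last. unfold f_add. reflexivity.
Qed.

Lemma prim_diff pih ell x a d : valid_prim_policy pih ->
  exists l, length l = d /\ (forall t, In t l -> G t) /\
    prim_traj pih ell x (a + d) = prim_traj pih ell x a + sumR l.
Proof.
  intros Hv. induction d as [|d [l [Hl [HG HE]]]].
  - exists []. split; [reflexivity|]. split; [simpl; tauto|]. rewrite Nat.add_0_r. unfold sumR; simpl. ring.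
  - destruct (prim_step pih ell x (a + d) Hv) as [u [Hu Hs]].
    exists (u :: l). split; [simpl; lia|]. split.
    + intros t [Ht|Ht]; [subst; apply binary_G; exact Hu | apply HG; exact Ht].
    + rewrite Nat.add_succ_r, Hs, HE. unfold sumR; simpl. ring.
Qed.

Lemma sec_third k : sec_traj const_third k = INR k / 3.
Proof.
  induction k.
  - unfold sec_traj. simpl. lra.
  - unfold sec_traj in *. simpl. destruct (sec_run const_third k) as [st ac]. simpl in *.
    rewrite last_last. unfold f_add, const_third. rewrite IHk. rewrite ?S_INR. destruct k; simpl; lra.
Qed.

Lemma h_sqz_some x q : h_sqz x = Some q -> sqz_cond x q.
Proof.
  unfold h_sqz. destruct excluded_middle_informative as [H|H]; [|discriminate].
  intro E. injection E. intro; subst. apply proj2_sig.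
Qed.

Lemma h_sqz_ex x q : sqz_cond x q -> exists q', h_sqz x = Some q' /\ sqz_cond x q'.
Proof.
  intro Hq. unfold h_sqz. destruct excluded_middle_informative as [H|H].
  - eexists. split; [reflexivity|]. apply proj2_sig.
  - exfalso. apply H. eauto.
Qed.

Lemma sqz_small q : (1 <= q)%nat -> 1 / (4 * 2 ^ q) <= 1/8.
Proof.
  intros Hq. assert (2 <= 2 ^ q).
  { replace 2 with (2 ^ 1) at 1 by ring. apply Rle_pow; [lra|lia]. }
  apply Rmult_le_compat_l; [lra|]. apply Rinv_le_contravar; lra.
Qed.

Lemma sqz_uniq x q q' : sqz_cond x q -> sqz_cond x q' -> q = q'.
Proof.
  intros [H1 [H2 H3]] [H1' [H2' H3']].
  pose proof (sqz_small q H1). pose proof (sqz_small q' H1').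
  destruct (lt_eq_lt_dec q q') as [[Hl|Hl]|Hl]; auto; exfalso.
  - assert (INR q + 1 <= INR q') by (rewrite <- S_INR; apply le_INR; lia). lra.
  - assert (INR q' + 1 <= INR q) by (rewrite <- S_INR; apply le_INR; lia). lra.
Qed.

Lemma max_gap_ge z N k : (1 <= k <= N)%nat -> (z (S k) - z k <= max_gap z N)%nat.
Proof.
  intros Hk. unfold max_gap.
  assert (Hin : In (z (S k) - z k)%nat (map (fun k => (z (S k) - z k)%nat) (seq 1 N))).
  { apply in_map_iff. exists k. split; [reflexivity|]. apply in_seq. lia. }
  revert Hin. generalize (map (fun k => (z (S k) - z k)%nat) (seq 1 N)).
  intros l. induction l as [|a l IH]; simpl; [tauto|]. intros [<-|H]; [lia|]. specialize (IH H). lia.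
Qed.

Lemma nat_above (T : R) : exists M : nat, T < INR M.
Proof.
  destruct (archimed T) as [H1 _].
  destruct (Z_le_gt_dec 0 (up T)) as [H|H].
  - exists (Z.to_nat (up T)). rewrite INR_IZR_INZ, Z2Nat.id by exact H. exact H1.
  - exists 0%nat. assert (H2 : (up T < 0)%Z) by lia. apply IZR_lt in H2. simpl. lra.
Qed.

Theorem lemma2 :
  forall (pih : prim_policy) (ell : nat -> nat) (z : nat -> nat),
    illusion_witness pih ell z ->
    valid_sec_policy const_third ->
    forall T : R,
      exists N : nat, (0 < N)%nat /\ T < INR (max_gap z N).
Proof.
  intros pih ell z [Hv [Hz Hw]] Hc T.
  destruct (classic (exists N : nat, (0 < N)%nat /\ T < INR (max_gap z N))) as [H|Hn]; [exact H|].
  exfalso.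
  set (P := fun k => prim_traj pih ell (sec_traj const_third) (z k)).
  assert (Hnear : forall k, (1 <= k)%nat -> sqz_cond (P k) k).
  { intros k Hk. specialize (Hw const_third Hc k). rewrite sec_third in Hw.
    assert (Hs : sqz_cond (INR k / 3) k).
    { split; [exact Hk|]. assert (0 < 1 / (4 * 2 ^ k)).
      { apply Rdiv_lt_0_compat; [lra|]. pose proof (pow2_pos k). lra. } lra. }
    destruct (h_sqz_ex _ _ Hs) as [q' [Hq' Hs']].
    rewrite (sqz_uniq _ _ _ Hs' Hs) in Hq'. rewrite Hq' in Hw.
    apply h_sqz_some. symmetry. exact Hw. }
  destruct (nat_above T) as [M HM].
  destruct (core M) as [K HK].
  set (k := S (S K)).
  assert (Hzk : (z k < z (S k))%nat) by (apply Hz; lia).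
  destruct (prim_diff pih ell (sec_traj const_third) (z k) (z (S k) - z k) Hv) as [l [Hl [HG HE]]].
  replace (z k + (z (S k) - z k))%nat with (z (S k)) in HE by lia.
  assert (Hlen : (length l <= M)%nat).
  { rewrite Hl. assert (Hg := max_gap_ge z k k ltac:(unfold k; lia)).
    assert (INR (max_gap z k) <= T).
    { apply Rnot_lt_le. intro Hlt. apply Hn. exists k. split; [unfold k; lia|exact Hlt]. }
    apply le_INR in Hg. assert (INR (z (S k) - z k) < INR M) by lra.
    apply INR_lt in H0. lia. }
  specialize (HK l HG Hlen).
  destruct (Hnear k ltac:(unfold k; lia)) as [_ [A1 A2]].
  destruct (Hnear (S k) ltac:(unfold k; lia)) as [_ [B1 B2]].
  unfold P in A1, A2, B1, B2. rewrite HE in B1, B2.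
  rewrite S_INR in B1, B2.
  assert (HP := pow2_pos K).
  unfold k in *. simpl pow in *.
  assert (I1 : 1 / (4 * (2 * (2 * 2 ^ K))) = /16 * / 2 ^ K) by (field; lra).
  assert (I2 : 1 / (4 * (2 * (2 * (2 * 2 ^ K)))) = /32 * / 2 ^ K) by (field; lra).
  assert (I3 : / (3 * 2 ^ K) = /3 * / 2 ^ K) by (field; lra).
  assert (Hi : 0 < / 2 ^ K) by (apply Rinv_0_lt_compat; lra).
  rewrite I1 in A1, A2. rewrite I2 in B1, B2. rewrite I3 in HK.
  revert HK. unfold Rabs. destruct Rcase_abs; intros; lra.
Qed.
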